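(* Consider the problem $\min_{x\in\mathbb{R}^n} F(x):=f(x)+g(x)$ subject to $Ax=b$, under the setting described in the context, and let $\lambda^*$ be an optimal solution of $\max_{\lambda\in\mathbb{R}^m} d(\lambda)$. Let $\{\lambda^k\}$ be generated by the IAL framework described in the context, where the tolerance sequence $\{\eta_k\}$ is positive, nonincreasing, and satisfies $\sum_{k=1}^{+\infty}\eta_k<+\infty$. Let $\delta_k:=d(\lambda^* )-d(\lambda^k)$, $$B:=\sqrt{\|\lambda^1-\lambda^*\|^2+2\beta\sum_{k=1}^{+\infty}\eta_k},\qquad \theta:=\frac{\beta}{4B^2},$$ and let $k_0\ge 4$ be an integer such that $$\max_{k\ge k_0}\delta_k\le\frac{1}{2\theta}\quad\text{and}\quad\max_{k\ge k_0}\eta_k\le\frac{1}{24\theta}.$$ Suppose moreover that $$\sqrt{\frac{\eta_{k+1}}{\eta_k}}\ge\frac{k-2}{k},\qquad k=k_0,k_0+1,\dots.$$ Define $\tau_1:=\frac{k_0}{4\theta}$ and $\tau_2:=\frac{1}{4\theta\sqrt{\eta_{k_0}}}$. Then $$\delta_k\le\frac{\tau_1}{k}+\tau_2\sqrt{\eta_k},\qquad k=k_0,k_0+1,\dots.$$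
   Context: Let $A\in\mathbb{R}^{m\times n}$ and $b\in\mathbb{R}^m$. Let $f:\mathbb{R}^n\to\mathbb{R}$ be convex and differentiable with Lipschitz continuous gradient. Let $g:\mathbb{R}^n\to\mathbb{R}\cup\{+\infty\}$ be a closed proper convex (possibly nonsmooth) function with bounded domain. Fix a penalty parameter $\beta>0$. For $\lambda\in\mathbb{R}^m$, define $$\hat f_\beta(x;\lambda):=f(x)+\langle\lambda,Ax-b\rangle+\tfrac{\beta}{2}\|Ax-b\|^2,\qquad \mathcal{L}_\beta(x;\lambda):=\hat f_\beta(x;\lambda)+g(x),$$ and $d(\lambda):=\min_{x\in\mathbb{R}^n}\mathcal{L}_\beta(x;\lambda)$. Here $\nabla\hat f_\beta(x;\lambda)$ denotes the gradient of $\hat f_\beta$ with respect to $x$. IAL framework: choose $x^1\in\operatorname{dom} g$, $\lambda^1\in\mathbb{R}^m$, and a nonnegative sequence $\{\eta_k\}$. For $k=1,2,\dots$: find a point $x^{k+1}$ such that $$\max_{x\in\mathbb{R}^n}\Big\{\langle\nabla\hat f_\beta(x^{k+1};\lambda^k),\,x^{k+1}-x\rangle+g(x^{k+1})-g(x)\Big\}\le\eta_k,$$ and then set $\lambda^{k+1}=\lambda^k+\beta(Ax^{k+1}-b)$. *)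

(* Defs.v *)
From HB Require Import structures.
From mathcomp Require Import all_boot all_order all_algebra.
From mathcomp Require Import all_classical all_reals all_analysis.
Set Implicit Arguments. Unset Strict Implicit. Unset Printing Implicit Defensive.
Import Order.TTheory GRing.Theory Num.Theory.
Import numFieldNormedType.Exports.
Local Open Scope classical_set_scope.
Local Open Scope ring_scope.

Section Defs.
Variable R : realType.

Definition dotv (p : nat) (u v : 'cV[R]_p) : R := \sum_(i < p) u i 0 * v i 0.
Definition enorm (p : nat) (u : 'cV[R]_p) : R := Num.sqrt (dotv u u).

Definition convex_fun (n : nat) (f : 'cV[R]_n -> R) : Prop :=
  forall (x y : 'cV[R]_n) (t : R), 0 <= t <= 1 ->
    f (t *: x + (1 - t) *: y) <= t * f x + (1 - t) * f y.

Definition is_gradient (n : nat) (f : 'cV[R]_n -> R) (gf : 'cV[R]_n -> 'cV[R]_n) : Prop :=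
  forall x : 'cV[R]_n, forall eps : R, 0 < eps -> exists2 del : R, 0 < del &
    forall h : 'cV[R]_n, enorm h < del ->
      `| f (x + h) - f x - dotv (gf x) h | <= eps * enorm h.

Definition lipschitz_grad (n : nat) (gf : 'cV[R]_n -> 'cV[R]_n) : Prop :=
  exists L : R, forall x y, enorm (gf x - gf y) <= L * enorm (x - y).

Definition proper_fun (n : nat) (g : 'cV[R]_n -> \bar R) : Prop :=
  (exists x, g x < +oo)%E /\ (forall x, -oo < g x)%E.

Definition convex_efun (n : nat) (g : 'cV[R]_n -> \bar R) : Prop :=
  forall (x y : 'cV[R]_n) (t : R), 0 < t < 1 ->
    (g (t *: x + (1 - t) *: y)%R <= t%:E * g x + (1 - t)%:E * g y)%E.

Definition closed_efun (n : nat) (g : 'cV[R]_n -> \bar R) : Prop :=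
  closed [set p : 'cV[R]_n * R | (g p.1 <= p.2%:E)%E].

Definition bounded_dom (n : nat) (g : 'cV[R]_n -> \bar R) : Prop :=
  exists M : R, forall x, (g x < +oo)%E -> enorm x <= M.

Definition grad_fhat (m n : nat) (gf : 'cV[R]_n -> 'cV[R]_n) (A : 'M[R]_(m, n))
  (b : 'cV[R]_m) (beta : R) (x : 'cV[R]_n) (lam : 'cV[R]_m) : 'cV[R]_n :=
  gf x + A^T *m lam + beta *: (A^T *m (A *m x - b)).

Definition fhat (m n : nat) (f : 'cV[R]_n -> R) (A : 'M[R]_(m, n))
  (b : 'cV[R]_m) (beta : R) (x : 'cV[R]_n) (lam : 'cV[R]_m) : R :=
  f x + dotv lam (A *m x - b) + beta / 2 * enorm (A *m x - b) ^+ 2.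

Definition Lag (m n : nat) (f : 'cV[R]_n -> R) (g : 'cV[R]_n -> \bar R)
  (A : 'M[R]_(m, n)) (b : 'cV[R]_m) (beta : R) (x : 'cV[R]_n) (lam : 'cV[R]_m)
  : \bar R := ((fhat f A b beta x lam)%:E + g x)%E.

(* d(lam) = min_x L_beta(x;lam), written as an infimum (attained in this setting) *)
Definition dual (m n : nat) (f : 'cV[R]_n -> R) (g : 'cV[R]_n -> \bar R)
  (A : 'M[R]_(m, n)) (b : 'cV[R]_m) (beta : R) (lam : 'cV[R]_m) : \bar R :=
  ereal_inf [set Lag f g A b beta x lam | x in [set: 'cV[R]_n]].

End Defs.

(* Main.v *)
Require Import Defs.
From HB Require Import structures.
From mathcomp Require Import all_boot all_order all_algebra.
From mathcomp Require Import all_classical all_reals all_analysis.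
From mathcomp Require Import ring lra.
Import Order.TTheory GRing.Theory Num.Theory.
Import numFieldNormedType.Exports.
Local Open Scope classical_set_scope.
Local Open Scope ring_scope.
Set Implicit Arguments. Unset Strict Implicit. Unset Printing Implicit Defensive.

Section Dot.

Variable R : realType.
Implicit Types (p : nat).

Lemma dotvDl p (u v w : 'cV[R]_p) : dotv (u + v) w = dotv u w + dotv v w.
Proof. by rewrite /dotv -big_split; apply: eq_bigr => i _; rewrite !mxE mulrDl. Qed.
Lemma dotvZl p a (u w : 'cV[R]_p) : dotv (a *: u) w = a * dotv u w.
Proof. by rewrite /dotv mulr_sumr; apply: eq_bigr => i _; rewrite !mxE mulrA. Qed.
Lemma dotvC p (u w : 'cV[R]_p) : dotv u w = dotv w u.
Proof. by rewrite /dotv; apply: eq_bigr => i _; rewrite mulrC. Qed.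
Lemma dotvDr p (u v w : 'cV[R]_p) : dotv w (u + v) = dotv w u + dotv w v.
Proof. by rewrite dotvC dotvDl !(dotvC w). Qed.
Lemma dotvZr p a (u w : 'cV[R]_p) : dotv w (a *: u) = a * dotv w u.
Proof. by rewrite dotvC dotvZl dotvC. Qed.
Lemma dotvNl p (u w : 'cV[R]_p) : dotv (- u) w = - dotv u w.
Proof. by rewrite -scaleN1r dotvZl mulN1r. Qed.
Lemma dotvNr p (u w : 'cV[R]_p) : dotv w (- u) = - dotv w u.
Proof. by rewrite dotvC dotvNl dotvC. Qed.
Lemma dotvBl p (u v w : 'cV[R]_p) : dotv (u - v) w = dotv u w - dotv v w.
Proof. by rewrite dotvDl dotvNl. Qed.
Lemma dotvBr p (u v w : 'cV[R]_p) : dotv w (u - v) = dotv w u - dotv w v.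
Proof. by rewrite dotvDr dotvNr. Qed.
Lemma dotv_ge0 p (u : 'cV[R]_p) : 0 <= dotv u u.
Proof. by rewrite /dotv; apply: sumr_ge0 => i _; rewrite -expr2 sqr_ge0. Qed.
Lemma dotv_tr m n (M : 'M[R]_(m, n)) (u : 'cV[R]_m) (z : 'cV[R]_n) :
  dotv u (M *m z) = dotv (M^T *m u) z.
Proof.
rewrite /dotv.
under eq_bigr => i _ do rewrite mxE big_distrr /=.
rewrite exchange_big /=; apply: eq_bigr => j _.
rewrite mxE big_distrl /=; apply: eq_bigr => i _.
rewrite mxE; ring.
Qed.
Lemma enorm_sq p (u : 'cV[R]_p) : enorm u ^+ 2 = dotv u u.
Proof. by rewrite /enorm sqr_sqrtr // dotv_ge0. Qed.

Lemma dotv_CS p (u v : 'cV[R]_p) : dotv u v ^+ 2 <= dotv u u * dotv v v.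
Proof.
set uu := dotv u u; set vv := dotv v v; set uv := dotv u v.
have h1 := dotv_ge0 (vv *: u - uv *: v).
have h2 := dotv_ge0 (uu *: v - uv *: u).
have h3 := dotv_ge0 (u - v).
have h4 := dotv_ge0 (u + v).
have huu := dotv_ge0 u. have hvv := dotv_ge0 v.
move: h1 h2 h3 h4.
rewrite !(dotvDl, dotvDr, dotvNl, dotvNr, dotvZl, dotvZr) -/uu -/vv -/uv.
rewrite (dotvC v u) -/uv => h1 h2 h3 h4.
have e1 : 0 <= vv * (uu * vv - uv ^+ 2) by nra.
have e2 : 0 <= uu * (uu * vv - uv ^+ 2) by nra.
have [vv0|vvp] := eqVneq vv 0.
  have [uu0|uup] := eqVneq uu 0.
    have -> : uv = 0 by lra.
    by rewrite uu0 vv0; lra.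
  have uup' : 0 < uu by rewrite lt_def uup.
  by rewrite -subr_ge0; rewrite -(pmulr_rge0 _ uup').
have vvp' : 0 < vv by rewrite lt_def vvp.
by rewrite -subr_ge0; rewrite -(pmulr_rge0 _ vvp').
Qed.
Lemma enormZ p (t : R) (h : 'cV[R]_p) : 0 <= t -> enorm (t *: h) = t * enorm h.
Proof.
move=> t0; rewrite /enorm dotvZl dotvZr mulrA -expr2 sqrtrM ?sqr_ge0 //.
by rewrite sqrtr_sqr ger0_norm.
Qed.
Lemma enorm_ge0 p (h : 'cV[R]_p) : 0 <= enorm h.
Proof. exact: sqrtr_ge0. Qed.

Lemma grad_ineq p (f : 'cV[R]_p -> R) gf : convex_fun f -> is_gradient f gf ->
  forall x z, f x + dotv (gf x) (z - x) <= f z.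
Proof.
move=> cf gr x z; set h := z - x.
have nh0 := enorm_ge0 h.
have key : forall eps, 0 < eps -> dotv (gf x) h <= f z - f x + eps * enorm h.
  move=> eps e0; have [del d0 Hd] := gr x eps e0.
  set t := Num.min 1 (del / (2 * (enorm h + 1))).
  have t0 : 0 < t by rewrite lt_min ltr01 /= divr_gt0 // mulr_gt0 // ltr_wpDl.
  have t1 : t <= 1 by rewrite ge_min lexx.
  have tle : t <= del / (2 * (enorm h + 1)) by rewrite ge_min lexx orbT.
  have tnh : enorm (t *: h) < del.
    rewrite (enormZ _ (ltW t0)).
    have : t * (2 * (enorm h + 1)) <= del.
      by rewrite -ler_pdivlMr // mulr_gt0 // ltr_wpDl.
    nra.
  have := Hd _ tnh; rewrite dotvZr (enormZ _ (ltW t0)).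
  have : f (t *: z + (1 - t) *: x) <= t * f z + (1 - t) * f x.
    by apply: cf; rewrite (ltW t0) t1.
  have -> : t *: z + (1 - t) *: x = x + t *: h.
    by rewrite /h scalerBr scalerBl scale1r addrCA.
  move=> hc; rewrite ler_norml => /andP [hn _].
  have : t * dotv (gf x) h <= t * (f z - f x + eps * enorm h) by lra.
  by rewrite ler_pM2l.
apply/ler_addgt0Pr => e e0.
have := key (e / (enorm h + 1)) (divr_gt0 e0 (ltr_wpDl nh0 ltr01)).
have : e / (enorm h + 1) * enorm h <= e.
  rewrite mulrC mulrA ler_pdivrMr ?(ltr_wpDl nh0 ltr01) //.
  by rewrite mulrC ler_pM2l //; lra.
lra.
Qed.

Variables (m n : nat) (A : 'M[R]_(m, n)) (b : 'cV[R]_m) (f : 'cV[R]_n -> R)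
  (gf : 'cV[R]_n -> 'cV[R]_n) (g : 'cV[R]_n -> \bar R) (beta : R).

Lemma lag_lower (lk w : 'cV[R]_m) (xk : 'cV[R]_n) (et gx : R) :
  convex_fun f -> is_gradient f gf -> 0 < beta -> g xk = gx%:E ->
  (forall z, ((dotv (grad_fhat gf A b beta xk lk) (xk - z))%:E + g xk - g z <= et%:E)%E) ->
  ((fhat f A b beta xk lk + gx - et + dotv w (A *m xk - b) - dotv w w / (2 * beta))%:E
     <= dual f g A b beta (lk + w))%E.
Proof.
move=> cf gr b0 gxE st; apply/ereal_infP => y [z _ <-].
have := st z; rewrite /Lag gxE.
case: (g z) => [gz| |]; last first.
- by [].
- by move=> _ /=; rewrite leey.

rewrite -EFinN -!EFinD !lee_fin => hs.
have hc := grad_ineq cf gr xk z.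
set r := A *m xk - b in hs *; set s := A *m z - b.
have Ad : A *m (xk - z) = r - s.
  by rewrite /r /s mulmxBr opprB addrA subrK.
move: hs; rewrite /grad_fhat !dotvDl dotvZl -!dotv_tr Ad.
have ez : z - xk = - (xk - z) by rewrite opprB.
rewrite ez dotvNr in hc.
rewrite /fhat !enorm_sq -/r -/s. clearbody r s.
have q0 := dotv_ge0 (beta *: (s - r) + w).
have qe : dotv (beta *: (s - r) + w) (beta *: (s - r) + w) / (2 * beta) =
  beta / 2 * (dotv s s - dotv r s - dotv s r + dotv r r) + (dotv w s - dotv w r)
  + dotv w w / (2 * beta).
  rewrite !(dotvDl, dotvDr, dotvNl, dotvNr, dotvZl, dotvZr, dotvBl, dotvBr).
  rewrite (dotvC s w) (dotvC r w); field; by rewrite gt_eqF.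
have q1 : 0 <= dotv (beta *: (s - r) + w) (beta *: (s - r) + w) / (2 * beta).
  by rewrite divr_ge0 // ltW // mulr_gt0.
rewrite qe in q1.
rewrite !(dotvDl, dotvDr, dotvNl, dotvNr, dotvBr, dotvBl).
rewrite dotvBr in hc; rewrite (dotvC s r) in q1.
lra.
Qed.

Lemma dotv_sqB p (v w : 'cV[R]_p) (c : R) :
  dotv (v - c *: w) (v - c *: w) = dotv v v - 2 * c * dotv v w + c ^+ 2 * dotv w w.
Proof.
rewrite !(dotvDl, dotvDr, dotvNl, dotvNr, dotvZl, dotvZr) (dotvC w v); ring.
Qed.

Lemma dotv0l p (v : 'cV[R]_p) : dotv 0 v = 0.
Proof. by rewrite /dotv big1 // => i _; rewrite mxE mul0r. Qed.

Lemma dual_upper (l lk : 'cV[R]_m) (xk : 'cV[R]_n) (gx : R) :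
  g xk = gx%:E ->
  (dual f g A b beta l <= (fhat f A b beta xk lk + dotv (l - lk) (A *m xk - b) + gx)%:E)%E.
Proof.
move=> gxE; apply: le_trans; first by apply: ereal_inf_lbound; exists xk.
rewrite /Lag gxE -EFinD lee_fin /fhat dotvBl; lra.
Qed.
End Dot.


Section S.

Variable R : rcfType.
Lemma aux1 (s : R) : 0 <= 1/16 - s/16 + s^+2/24.
Proof. have h := sqr_ge0 (s - 3/4). nra. Qed.
Lemma step_ineq (P P' E x y s q : R) :
 P <= (x+s)/4 -> 0 <= E -> E <= s^+2/24 -> 0 < s -> s <= 1 -> 0 < x -> x <= 1 ->
 x - y <= x^+2/4 -> 0 <= y -> 1 - x/2 <= q ->
 P' <= P + E -> (E <= P -> P' <= P + E - 2*(P-E)^+2) -> P' <= (y + q * s)/4.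
Proof.
move=> hP E0 Es s0 s1 x0 x1 xy y0 hq r1 r2.
have qs : (1 - x/2) * s <= q * s by rewrite ler_pM2r.
have s2 : s^+2 <= s by nra.
have x2 : x^+2 <= x by nra.
have xs : 0 <= x * s by nra.
have [EP|PE] := lerP E P; last first.
  by nra.
have r := r2 EP.
have [c1|c2] := lerP ((x+s)/4) (E + 1/4).
  have h1 : P + E - 2*(P-E)^+2 <= (x+s)/4 + E - 2*((x+s)/4-E)^+2.
    have : 0 <= ((x+s)/4 - P) * (1 - 2*((x+s)/4 + P - 2*E)) by apply: mulr_ge0; lra.
    nra.
  have h2 : (x+s)/4 - E >= x/4 + 5 * s/24 by nra.
  have h3 : 0 <= x/4 + 5 * s/24 by nra.
  have h4 : (x/4 + 5 * s/24)^+2 <= ((x+s)/4 - E)^+2.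
    by rewrite ler_sqr ?nnegrE //; lra.
  nra.
have h1 : P + E - 2*(P-E)^+2 <= 2 * E + 1/8 by have := sqr_ge0 (P - E - 1/4); nra.
have h5 := aux1 s.
have h6 : 3 * x/16 + s/4 - x*s/8 - s^+2/12 - 1/8 >= 0.
  have : 1 < x + s by lra.
  nra.
nra.
Qed.
Lemma seq_bound_gen (th : R) (a e : nat -> R) (k0 : nat) :
 0 < th -> (4 <= k0)%N ->
 (forall k, (k0<=k)%N -> a k <= 1/(2*th)) ->
 (forall k, (k0<=k)%N -> 0 < e k) ->
 (forall k, (k0<=k)%N -> e k <= 1/(24*th)) ->
 (forall k, (k0<=k)%N -> e k.+1 <= e k) ->
 (forall k, (k0<=k)%N -> (k%:R-2)/k%:R <= Num.sqrt(e k.+1 / e k)) ->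
 (forall k, (k0<=k)%N -> a k.+1 <= a k + e k) ->
 (forall k, (k0<=k)%N -> e k <= a k -> a k.+1 <= a k + e k - 2*th*(a k - e k)^+2) ->
 forall k, (k0<=k)%N ->
   th * a k <= (k0%:R / k%:R + Num.sqrt (e k) / Num.sqrt (e k0)) / 4.
Proof.
move=> th0 k04 ha he0 he24 hmon hq r1 r2.
have K0p : (0 < k0%:R :> R) by rewrite ltr0n; apply: leq_trans k04.
have K04 : (4 <= k0%:R :> R) by rewrite (ler_nat R 4 k0).
have e00 := he0 _ (leqnn k0).
have se0 : 0 < Num.sqrt (e k0) by rewrite sqrtr_gt0.
have emon : forall j, e (k0 + j)%N <= e k0.
  elim=> [|j IH]; first by rewrite addn0.
  by rewrite addnS; apply: le_trans (hmon _ (leq_addr _ _)) IH.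
suff H : forall j, th * a (k0 + j)%N <=
   (k0%:R / (k0 + j)%:R + Num.sqrt (e (k0 + j)%N) / Num.sqrt (e k0)) / 4.
  by move=> k /subnKC <-; apply: H.
elim=> [|j IH].
  rewrite addn0 (divff (lt0r_neq0 K0p)) (divff (lt0r_neq0 se0)).
  have := ha _ (leqnn k0).
  rewrite -(ler_pM2l th0) => h; apply: le_trans h _.
  have -> : th * (1 / (2 * th)) = 1/2 by field; rewrite gt_eqF.
  lra.
set k := (k0 + j)%N in IH *.
have kk : (k0 <= k)%N by rewrite leq_addr.
rewrite addnS -/k.
have Kp : (k0%:R <= k%:R :> R) by rewrite ler_nat.
have K0 : (0 < k%:R :> R) by lra.
have ek := he0 _ kk. have ek1 := he0 _ (leq_trans kk (leqnSn _)).
have qs : Num.sqrt (e k.+1 / e k) * (Num.sqrt (e k) / Num.sqrt (e k0)) =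
          Num.sqrt (e k.+1) / Num.sqrt (e k0).
  rewrite mulrA -sqrtrM ?divr_ge0 ?ltW // divfK ?gt_eqF //.
have s2 : (Num.sqrt (e k) / Num.sqrt (e k0)) ^+ 2 = e k / e k0.
  by rewrite expr_div_n !sqr_sqrtr ?ltW.
rewrite -qs -natr1.
apply: (@step_ineq (th * a k) _ (th * e k) (k0%:R / k%:R)).
- exact: IH.
- by rewrite mulr_ge0 // ltW.
- rewrite s2.
  have h1 : th * e k0 <= 1/24.
    have := he24 _ (leqnn k0); rewrite -(ler_pM2l th0) => h; apply: le_trans h _.
    have -> : th * (1 / (24 * th)) = 1/24 by field; rewrite gt_eqF.
  lra.
  have -> : th * e k = (th * e k0) * (e k / e k0) by field; rewrite gt_eqF.
  have X0 : 0 < e k / e k0 by rewrite divr_gt0.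
  nra.
- by rewrite divr_gt0 // sqrtr_gt0.
- rewrite ler_pdivrMr // mul1r; apply: ler_wsqrtr; exact: (emon j).
- by rewrite divr_gt0.
- by rewrite ler_pdivrMr // mul1r.
- have e1 : k0%:R / k%:R - k0%:R / (k%:R + 1) - (k0%:R / k%:R) ^+ 2 / 4 =
      k0%:R * (4 * k%:R - k0%:R * (k%:R + 1)) / (4 * k%:R ^+ 2 * (k%:R + 1)) :> R.
    by field; rewrite !gt_eqF //; lra.
  rewrite -subr_le0 e1; apply: mulr_le0_ge0; first by apply: mulr_ge0_le0; nra.
  by rewrite invr_ge0 mulr_ge0 //; nra.
- by rewrite divr_ge0 // ltW //; lra.
- apply: le_trans (hq _ kk).
  have -> : ((k%:R - 2) / k%:R) = 1 - 2 / k%:R :> R by field; rewrite gt_eqF.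
  have : 2 / k%:R <= k0%:R / k%:R / 2 :> R.
    rewrite -subr_ge0.
    have -> : k0%:R / k%:R / 2 - 2 / k%:R = (k0%:R - 4) / (2 * k%:R) :> R
      by field; rewrite gt_eqF.
    by rewrite divr_ge0 // ?subr_ge0 // mulr_ge0 //; lra.
  lra.
- have := r1 _ kk; rewrite -(ler_pM2l th0); lra.
- move=> h; have h' : e k <= a k by rewrite -(ler_pM2l th0).
  have := r2 _ kk h'; rewrite -(ler_pM2l th0) => hh; apply: le_trans hh _.
  have -> : th * (a k + e k - 2 * th * (a k - e k) ^+ 2) = th * a k + th * e k - 2 * (th * a k - th * e k) ^+ 2 by ring.
  by [].
Qed.
End S.

Theorem theorem2 (R : realType) (m n : nat) (A : 'M[R]_(m, n)) (b : 'cV[R]_m)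
  (f : 'cV[R]_n -> R) (gf : 'cV[R]_n -> 'cV[R]_n) (g : 'cV[R]_n -> \bar R)
  (beta : R) (lstar : 'cV[R]_m)
  (x : nat -> 'cV[R]_n) (lam : nat -> 'cV[R]_m) (eta : nat -> R)
  (S : R) (k0 : nat) :
  (* setting *)
  convex_fun f -> is_gradient f gf -> lipschitz_grad gf ->
  proper_fun g -> convex_efun g -> closed_efun g -> bounded_dom g ->
  0 < beta ->
  (* lstar maximizes d *)
  (forall l, (dual f g A b beta l <= dual f g A b beta lstar)%E) ->
  (* IAL framework *)
  (g (x 1%N) < +oo)%E ->
  (forall k, (1 <= k)%N ->
     forall z : 'cV[R]_n,
       ((dotv (grad_fhat gf A b beta (x k.+1) (lam k)) (x k.+1 - z))%:E
          + g (x k.+1) - g z <= (eta k)%:E)%E) ->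
  (forall k, (1 <= k)%N -> lam k.+1 = lam k + beta *: (A *m x k.+1 - b)) ->
  (* tolerances: positive, nonincreasing, summable with sum S = sum_{k>=1} eta_k *)
  (forall k, (1 <= k)%N -> 0 < eta k) ->
  (forall k, (1 <= k)%N -> eta k.+1 <= eta k) ->
  (fun N : nat => \sum_(1 <= k < N) eta k) @ \oo --> S ->
  let delta := fun k => (dual f g A b beta lstar - dual f g A b beta (lam k))%E in
  let B := Num.sqrt (enorm (lam 1%N - lstar) ^+ 2 + 2 * beta * S) in
  let theta := beta / (4 * B ^+ 2) in
  (4 <= k0)%N ->
  (forall k, (k0 <= k)%N -> (delta k <= (1 / (2 * theta))%:E)%E) ->
  (forall k, (k0 <= k)%N -> eta k <= 1 / (24 * theta)) ->
  (forall k, (k0 <= k)%N -> Num.sqrt (eta k.+1 / eta k) >= (k%:R - 2) / k%:R) ->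
  let tau1 := k0%:R / (4 * theta) in
  let tau2 := 1 / (4 * theta * Num.sqrt (eta k0)) in
  forall k, (k0 <= k)%N -> (delta k <= (tau1 / k%:R + tau2 * Num.sqrt (eta k))%:E)%E.
Proof.
move=> cf gr _ prop _ _ _ b0 hmax gx1 stat hlam eta0 etamon hS delta B theta
  k04 hdel heta hq tau1 tau2.
have gfin : forall k, (1 <= k)%N -> g (x k.+1) = (fine (g (x k.+1)))%:E.
  move=> k k1; case: prop => [[z0 hz0] hninf].
  have := stat k k1 z0; have := hninf (x k.+1); have := hninf z0.
  case: (g z0) hz0 => [gz| |] //= _ _.
  by case: (g (x k.+1)).
pose G k := fine (g (x k.+1)).
pose r k := A *m x k.+1 - b.
pose Phi k := fhat f A b beta (x k.+1) (lam k) + G k.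
have lower0 : forall k, (1 <= k)%N -> ((Phi k - eta k)%:E <= dual f g A b beta (lam k))%E.
  move=> k k1; have := lag_lower 0 cf gr b0 (gfin k k1) (stat k k1).
  by rewrite !dotv0l mul0r !subr0 !addr0 => h; apply: (le_trans _ h).
have lower1 : forall k, (1 <= k)%N ->
    ((Phi k - eta k + beta / 2 * dotv (r k) (r k))%:E <= dual f g A b beta (lam k.+1))%E.
  move=> k k1; have := lag_lower (beta *: r k) cf gr b0 (gfin k k1) (stat k k1).
  rewrite -hlam // dotvZl dotvZr => h; apply: (le_trans _ h).
  rewrite lee_fin le_eqVlt; apply/orP; left; apply/eqP.
  by rewrite /Phi /G /r !dotvZl; field; rewrite gt_eqF.
have upper : forall k l, (1 <= k)%N ->
    (dual f g A b beta l <= (Phi k + dotv (l - lam k) (r k))%:E)%E.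
  move=> k l k1; have := dual_upper A b f beta l (lam k) (gfin k k1).
  by rewrite /Phi /G /r; congr (_ <= _)%E; congr (_%:E); ring.
have finE : forall (y : \bar R) c d, (c%:E <= y)%E -> (y <= d%:E)%E -> y = (fine y)%:E.
  by move=> [] //.
pose D k := fine (dual f g A b beta (lam k)).
pose Ds := fine (dual f g A b beta lstar).
have dualE : forall k, (1 <= k)%N -> dual f g A b beta (lam k) = (D k)%:E.
  move=> k k1; apply: finE (lower0 k k1) _.
  apply: le_trans (upper k (lam k) k1) _; exact: lexx.
have dualsE : dual f g A b beta lstar = Ds%:E.
  apply: finE (le_trans (lower0 1%N (leqnn 1)) (hmax _)) (upper 1%N lstar (leqnn 1)).
have fa : forall k, (1 <= k)%N -> Phi k - eta k <= D k.
  by move=> k k1; have := lower0 k k1; rewrite dualE // lee_fin.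
have fa' : forall k, (1 <= k)%N -> D k <= Phi k.
  move=> k k1; have := upper k (lam k) k1; rewrite dualE // lee_fin subrr dotv0l addr0.
  by [].
have fb : forall k, (1 <= k)%N -> Phi k - eta k + beta / 2 * dotv (r k) (r k) <= D k.+1.
  by move=> k k1; have := lower1 k k1; rewrite dualE // lee_fin.
have fc : forall k, (1 <= k)%N -> Ds <= Phi k + dotv (lstar - lam k) (r k).
  by move=> k k1; have := upper k lstar k1; rewrite dualsE lee_fin.
have fd : forall k, (1 <= k)%N -> D k <= Ds.
  by move=> k k1; have := hmax (lam k); rewrite dualE // dualsE lee_fin.
pose P N := \sum_(1 <= j < N) eta j.
have Pstep : forall N, (1 <= N)%N -> P N.+1 = P N + eta N.
  by move=> N N1; rewrite /P big_nat_recr.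
have Pmon : {homo P : N M / (N <= M)%N >-> N <= M}.
  move=> N M /subnKC <-; elim: (M - N)%N => [|j IH]; first by rewrite addn0.
  apply: le_trans IH _; rewrite addnS.
  case: (posnP (N + j)) => [->|hp]; first by rewrite /P !big_geq.
  by rewrite Pstep // lerDl ltW // eta0.
have PS : forall N, P N <= S.
  move=> N; have := nondecreasing_cvgn_le Pmon (cvgP _ hS) N.
  by rewrite (cvg_lim (@Rhausdorff _) hS).
have S0 : 0 < S.
  apply: lt_le_trans (PS 2%N); rewrite Pstep // /P big_geq // add0r; exact: eta0.
pose uu k := dotv (lstar - lam k) (lstar - lam k).
have uu_step : forall k, (1 <= k)%N -> uu k.+1 <= uu k + 2 * beta * eta k.
  move=> k k1.
  have e1 : lstar - lam k.+1 = (lstar - lam k) - beta *: r k by rewrite hlam // opprD addrA.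
  have h1 := fc k k1; have h2 := fb k k1; have h3 := fd k.+1 (leqW k1).
  have hrr := dotv_ge0 (r k).
  rewrite /uu e1 dotv_sqB -/(uu k).
  set p := dotv (lstar - lam k) (r k) in h1 *.
  set rr := dotv (r k) (r k) in h2 hrr *.
  have : beta * (beta / 2 * rr - eta k) <= beta * p.
    by rewrite ler_pM2l //; lra.
  nra.
have uu_sum : forall k, (1 <= k)%N -> uu k <= uu 1%N + 2 * beta * P k.
  elim=> [//|[|k] IH _]; first by rewrite /P big_geq // mulr0 addr0.
  apply: le_trans (uu_step _ (ltn0Sn _)) _.
  rewrite Pstep //; have := IH (ltn0Sn _); lra.
have B2E : B ^+ 2 = uu 1%N + 2 * beta * S.
  rewrite /B sqr_sqrtr; last by rewrite addr_ge0 ?sqr_ge0 // mulr_ge0 // ?mulr_ge0 // ltW.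
  by rewrite enorm_sq /uu -opprB dotvNl dotvNr opprK.
have uuB : forall k, (1 <= k)%N -> uu k <= B ^+ 2.
  move=> k k1; rewrite B2E; apply: le_trans (uu_sum k k1) _.
  by rewrite lerD2l ler_pM2l ?mulr_gt0.
have B2p : 0 < B ^+ 2.
  rewrite B2E; have h : 0 <= uu 1%N := dotv_ge0 _.
  have : 0 < 2 * beta * S by rewrite !mulr_gt0.
  lra.
have th0 : 0 < theta by rewrite /theta divr_gt0 // mulr_gt0.
pose dl k := Ds - D k.
have deltaE : forall k, (1 <= k)%N -> delta k = (dl k)%:E.
  by move=> k k1; rewrite /delta dualsE dualE // -EFinB.
have k01 : (1 <= k0)%N by apply: leq_trans k04.
have r1 : forall k, (k0 <= k)%N -> dl k.+1 <= dl k + eta k.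
  move=> k kk; have k1 := leq_trans k01 kk.
  have := fa' k k1; have := fb k k1.
  have : 0 <= beta / 2 * dotv (r k) (r k) by rewrite mulr_ge0 ?dotv_ge0 // divr_ge0 // ltW.
  rewrite /dl; lra.
have r2 : forall k, (k0 <= k)%N -> eta k <= dl k ->
    dl k.+1 <= dl k + eta k - 2 * theta * (dl k - eta k) ^+ 2.
  move=> k kk he; have k1 := leq_trans k01 kk.
  have h1 := fc k k1; have h2 := fb k k1; have h3 := fa' k k1; have h4 := fa k k1.
  have cs := dotv_CS (lstar - lam k) (r k).
  have hu := uuB k k1.
  have hrr := dotv_ge0 (r k).
  set p := dotv (lstar - lam k) (r k) in h1 cs *.
  set rr := dotv (r k) (r k) in h2 hrr cs *.
  rewrite -/(uu k) in cs.
  set B2 := B ^+ 2 in hu B2p *.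
  set Y := (dl k - eta k) ^+ 2.
  have hp : 0 <= dl k - eta k <= p by rewrite /dl in he *; apply/andP; split; lra.
  have hY : Y <= B2 * rr.
    apply: (le_trans _ (le_trans cs _)); last by rewrite ler_wpM2r.
    by rewrite /Y ler_sqr ?nnegrE; lra.
  have hZ : beta * rr <= 2 * (dl k - dl k.+1 + eta k) by rewrite /dl; lra.
  have hBY : beta * Y <= 2 * B2 * (dl k - dl k.+1 + eta k).
    have : beta * Y <= beta * (B2 * rr) by rewrite ler_pM2l.
    have : B2 * (beta * rr) <= B2 * (2 * (dl k - dl k.+1 + eta k)) by rewrite ler_pM2l.
    nra.
  have -> : 2 * theta * Y = (beta * Y) / (2 * B2) by rewrite /theta -/B2; field; rewrite gt_eqF.
  have : (beta * Y) / (2 * B2) <= dl k - dl k.+1 + eta k.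
    have h2B : 0 < 2 * B2 by lra.
    by rewrite ler_pdivrMr //; lra.
  lra.
have ha : forall k, (k0 <= k)%N -> dl k <= 1 / (2 * theta).
  by move=> k kk; have := hdel k kk; rewrite deltaE ?lee_fin // (leq_trans k01 kk).
have he0 : forall k, (k0 <= k)%N -> 0 < eta k.
  by move=> k kk; apply: eta0; apply: leq_trans kk.
have hmon : forall k, (k0 <= k)%N -> eta k.+1 <= eta k.
  by move=> k kk; apply: etamon; apply: leq_trans kk.
move=> k kk; have k1 := leq_trans k01 kk.
have := seq_bound_gen th0 k04 ha he0 heta hmon hq r1 r2 kk.
rewrite deltaE // lee_fin => H.
have e00 := he0 _ (leqnn k0).
have se0 : 0 < Num.sqrt (eta k0) by rewrite sqrtr_gt0.
have kp : (0 < k%:R :> R) by rewrite ltr0n.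
have -> : tau1 / k%:R + tau2 * Num.sqrt (eta k) =
   (k0%:R / k%:R + Num.sqrt (eta k) / Num.sqrt (eta k0)) / 4 / theta.
  rewrite /tau1 /tau2; field.
  by rewrite !gt_eqF.
by rewrite ler_pdivlMr // mulrC.
Qed.
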